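(* Let $n\ge 1$ and $a_i=F_{i+2}-i-2$. For every game path of the Zeckendorf game on $n$ starting from $\{F_1^n\}$, if $MC_i$ denotes the number of moves of type $C_i$ ($i\ge 2$) in the path, then the length of the path equals $$\sum_{i=1}^{i_{\max}(n)} a_i\,\delta_i\;-\;\sum_{i\ge 2}(i-1)\,MC_i .$$ In particular, a game path attains length exactly $\sum_{i} a_i\delta_i$ if and only if it uses no moves $C_i$ with $i\ge 2$ (i.e. only splitting moves and $C_1$).
   Context: Fibonacci numbers are indexed by $F_1=1$, $F_2=2$, $F_{i+1}=F_i+F_{i-1}$. A game state is a finite multiset of Fibonacci numbers (tracked by index); $\{F_1^n\}$ denotes $n$ copies of $F_1$. The legal moves are: $C_1$: replace $F_1,F_1$ by $F_2$; for $i\ge 2$, $C_i$: replace $F_{i-1},F_i$ by $F_{i+1}$; $S_2$: replace $F_2,F_2$ by $F_1,F_3$; for $i\ge 3$, $S_i$: replace $F_i,F_i$ by $F_{i-2},F_{i+1}$. The game on $n$ starts at $\{F_1^n\}$ and a game path is a sequence of legal moves continued until no legal move is available, which happens exactly at the Zeckendorf decomposition of $n$ (the unique representation of $n$ as a sum of $F_i$'s with distinct, pairwise non-consecutive indices); the length of a path is its number of moves. Write the Zeckendorf decomposition as $n=\sum_{i=1}^{i_{\max}(n)}\delta_i F_i$ with $\delta_i\in\{0,1\}$ and $i_{\max}(n)$ the largest index occurring. *)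

(* Defs.v *)
From HB Require Import structures.
From mathcomp Require Import all_boot all_order all_algebra.
Set Implicit Arguments. Unset Strict Implicit. Unset Printing Implicit Defensive.
Import GRing.Theory Num.Theory.

(* Fibonacci numbers with F_1 = 1, F_2 = 2, F_{i+1} = F_i + F_{i-1};
   F_0 := 1 is an unused auxiliary value. *)
Fixpoint fib (i : nat) : nat :=
  match i with
  | 0 => 1
  | 1 => 1
  | (k.+1 as j).+1 => fib j + fib k
  end.

(* A game state: multiset of Fibonacci numbers tracked by index,
   s i = multiplicity of F_i (index 0 unused). *)
Definition state := nat -> nat.

Inductive move := C of nat | S of nat.

Definition move_eqb (m1 m2 : move) : bool :=
  match m1, m2 with
  | C i, C j => i == j
  | S i, S j => i == j
  | _, _ => false
  end.
Lemma move_eqP : Equality.axiom move_eqb.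
Proof.
by case=> [i|i] [j|j] /=; (try by constructor); apply: (iffP eqP) => [->|[]].
Qed.
HB.instance Definition _ := hasDecEq.Build move move_eqP.

Definition inc (i : nat) (s : state) : state :=
  fun j => if j == i then (s j).+1 else s j.
Definition dec (i : nat) (s : state) : state :=
  fun j => if j == i then (s j).-1 else s j.

(* Legality of a move in a state. C_1 : F_1,F_1 -> F_2;
   C_i (i>=2) : F_{i-1},F_i -> F_{i+1}; S_2 : F_2,F_2 -> F_1,F_3;
   S_i (i>=3) : F_i,F_i -> F_{i-2},F_{i+1}. *)
Definition legal (m : move) (s : state) : bool :=
  match m with
  | C i => if i == 1 then 2 <= s 1
           else (2 <= i) && (1 <= s i.-1) && (1 <= s i)
  | S i => (2 <= i) && (2 <= s i)
  end.

Definition apply_move (m : move) (s : state) : state :=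
  match m with
  | C i => if i == 1 then inc 2 (dec 1 (dec 1 s))
           else inc i.+1 (dec i (dec i.-1 s))
  | S i => if i == 2 then inc 3 (inc 1 (dec 2 (dec 2 s)))
           else inc i.+1 (inc (i - 2) (dec i (dec i s)))
  end.

Definition terminal (s : state) : Prop := forall m, ~~ legal m s.

Fixpoint is_path (s : state) (ms : seq move) : Prop :=
  match ms with
  | [::] => terminal s
  | m :: ms' => legal m s /\ is_path (apply_move m s) ms'
  end.

Definition start (n : nat) : state := fun j => if j == 1 then n else 0.

Definition game_path (n : nat) (ms : seq move) : Prop := is_path (start n) ms.

Definition zeckendorf (n : nat) (delta : nat -> nat) (imax : nat) : Prop :=
  [/\ 1 <= imax, delta imax = 1,
      forall i, 1 <= i <= imax -> delta i <= 1,
      forall i, 1 <= i < imax -> delta i * delta i.+1 = 0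
    & n = \sum_(1 <= i < imax.+1) delta i * fib i].

Definition acoef (i : nat) : int := (fib (i + 2))%:Z - (i + 2)%:Z.

Definition MC (ms : seq move) (i : nat) : nat := count (pred1 (C i)) ms.


(* Index of a move; any MC_i with i > maxidx ms is 0, so the infinite sum
   sum_{i>=2} (i-1) MC_i is the finite sum up to maxidx ms. *)
Definition midx (m : move) : nat := match m with C i => i | S i => i end.
Definition maxidx (ms : seq move) : nat := \max_(m <- ms) midx m.

(* Main.v *)
Require Import Defs.
From mathcomp Require Import all_boot all_order all_algebra.
From mathcomp Require Import zify ring lra.
Import GRing.Theory Num.Theory.
Local Open Scope ring_scope.

Definition Pc (c : nat -> int) (N : nat) (s : state) : int :=
  \sum_(1 <= i < N) (s i)%:Z * c i.

Lemma sum_upd (F G : nat -> int) j a N : (a <= j < N)%N ->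
  (forall i, i != j -> F i = G i) ->
  \sum_(a <= i < N) F i = \sum_(a <= i < N) G i + (F j - G j).
Proof.
elim: N => [|N IH]; first by lia.
move=> hj hFG.
have aN : (a <= N)%N by lia.
rewrite !big_nat_recr //=.
case: (ltnP j N) => hjN.
  rewrite (IH _ hFG); last by lia.
  rewrite (hFG N); first by rewrite addrAC.
  by rewrite neq_ltn hjN orbT.
have -> : j = N by lia.
rewrite (eq_big_nat _ _ (F1 := F) (F2 := G)); first by ring.
move=> i hi; apply: hFG; rewrite neq_ltn; apply/orP; left; lia.
Qed.

Lemma P_inc c N s j : (1 <= j < N)%N -> Pc c N (inc j s) = Pc c N s + c j.
Proof.
move=> hj; rewrite /Pc (@sum_upd _ (fun i => (s i)%:Z * c i) j) //; last first.
  by move=> i hi; rewrite /inc (negbTE hi).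
rewrite /inc eqxx; congr (_ + _).
rewrite -mulrBl; have -> : ((s j).+1)%:Z - (s j)%:Z = 1 by lia.
by rewrite mul1r.
Qed.

Lemma P_dec c N s j : (0 < s j)%N -> (1 <= j < N)%N -> Pc c N (dec j s) = Pc c N s - c j.
Proof.
move=> hs hj; rewrite /Pc (@sum_upd _ (fun i => (s i)%:Z * c i) j) //; last first.
  by move=> i hi; rewrite /dec (negbTE hi).
rewrite /dec eqxx; congr (_ + _).
rewrite -mulrBl; have -> : ((s j).-1)%:Z - (s j)%:Z = -1 by lia.
by rewrite mulN1r.
Qed.

Definition wt (i : nat) : int := (i + 2)%N%:Z - (fib (i + 2))%:Z.
Definition fz (i : nat) : int := (fib i)%:Z.
Definition extra (m : move) : nat := match m with C i => i.-1 | S _ => 0%N end.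
Definition cost (m : move) : int := 1 + (extra m)%:Z.

Lemma fibSS k : fib k.+2 = (fib k.+1 + fib k)%N.
Proof. by []. Qed.

Ltac fin := rewrite /wt /fz /cost /= ?addn2 ?fibSS; lia.

Lemma move_wt N s m : legal m s -> ((midx m).+1 < N)%N ->
  Pc wt N (apply_move m s) = Pc wt N s - cost m /\
  Pc fz N (apply_move m s) = Pc fz N s.
Proof.
case: m => i /=.
- case: (eqVneq i 1) => [->|ne1] hl hN.
    have h1 : (0 < (dec 1 s) 1)%N by rewrite /dec eqxx; lia.
    rewrite !P_inc ?P_dec //; try lia.
    generalize (Pc wt N s) (Pc fz N s) => P Q.
    split; fin.
  case: i ne1 hl hN => [|[|k]] //.
  move=> _ /andP[/andP[_ h1] h2] hN; rewrite /= in h1.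
  have h3 : (0 < (dec k.+1 s) k.+2)%N by rewrite /dec /= eqSS (gtn_eqF (ltnSn k)).
  rewrite !P_inc ?P_dec //; try lia.
  generalize (Pc wt N s) (Pc fz N s) => P Q.
  split; fin.
- case: i => [|[|[|k]]] // hl hN; move/andP: hl => [_ h].
    have h1 : (0 < (dec 2 s) 2)%N by rewrite /dec eqxx; lia.
    rewrite !P_inc ?P_dec //; try lia.
    generalize (Pc wt N s) (Pc fz N s) => P Q.
    split; fin.
  have h1 : (0 < (dec k.+3 s) k.+3)%N by rewrite /dec eqxx; lia.
  have -> : (k.+3 - 2 = k.+1)%N by lia.
  rewrite !P_inc ?P_dec //; try lia.
  generalize (Pc wt N s) (Pc fz N s) => P Q.
  split; fin.
Qed.

Definition final (s : state) (ms : seq move) : state :=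
  foldl (fun s m => apply_move m s) s ms.

Lemma path_lemma N ms : forall s, is_path s ms ->
  all (fun m => ((midx m).+1 < N)%N) ms ->
  [/\ Pc wt N s = Pc wt N (final s ms) + \sum_(m <- ms) cost m,
      Pc fz N s = Pc fz N (final s ms) & terminal (final s ms)].
Proof.
elim: ms => [|m ms IH] s /=.
  by move=> ht _; rewrite big_nil addr0.
move=> [hl hp] /andP[hm hall].
have [e1 e2] := @move_wt N s m hl hm.
have [f1 f2 f3] := IH _ hp hall.
split => //; last by rewrite -e2.
rewrite big_cons addrCA -f1 e1; ring.
Qed.

Lemma sum_cost ms : \sum_(m <- ms) cost m = (size ms)%:Z + (\sum_(m <- ms) extra m)%N%:Z.
Proof.
elim: ms => [|m ms IH]; first by rewrite !big_nil.
rewrite !big_cons IH /cost /=; lia.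
Qed.

Lemma sum_delta (f : nat -> nat) j a b :
  (\sum_(a <= i < b) f i * (j == i))%N = if (a <= j < b)%N then f j else 0%N.
Proof.
elim: b => [|b IH]; first by rewrite big_geq //; case: ifP => //; lia.
case: (leqP a b) => hab.
  rewrite big_nat_recr //= IH.
  case: (eqVneq j b) => [->|ne].
    rewrite muln1; have -> : (a <= b < b)%N = false by lia.
    by rewrite hab ltnSn.
  rewrite muln0 addn0; congr (if _ then _ else _).
  move: ne; rewrite neq_ltn => /orP [] h; lia.
rewrite big_geq //; case: ifP => //; lia.
Qed.

Lemma MC_cons m ms i : MC (m :: ms) i = ((m == C i) + MC ms i)%N.
Proof. by []. Qed.

Lemma eqCmv j i : (C j == C i) = (j == i).
Proof. by apply/eqP/eqP => [[]|->]. Qed.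

Lemma sum_extra K ms : all (fun m => (midx m <= K)%N) ms ->
  (\sum_(m <- ms) extra m)%N = (\sum_(2 <= i < K.+1) (i - 1) * MC ms i)%N.
Proof.
elim: ms => [|m ms IH].
  by move=> _; rewrite big_nil big1 // => i _; rewrite /MC /= muln0.
move=> /andP[hm hall]; rewrite big_cons IH //; apply/esym.
under eq_bigr => i _ do rewrite MC_cons mulnDr.
rewrite big_split /=; congr (_ + _)%N.
case: m hm => j /= hj.
  under eq_bigr => i _ do rewrite eqCmv.
  rewrite sum_delta; case: ifP => h; first by lia.
  move: h; case: j hj => [|[|j]] //= hj; lia.
by rewrite big1 // => i _; rewrite muln0.
Qed.

Module Dm.
Local Close Scope ring_scope.

Arguments fib : simpl never.

Definition zeck_like (x : nat -> nat) :=
  (forall i, 1 <= i -> x i <= 1) /\ (forall i, 1 <= i -> x i * x i.+1 = 0).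

Lemma terminal_zeck s : terminal s -> zeck_like s.
Proof.
move=> ht; split.
  case=> [|[|i]] // _.
    by have := ht (C 1); rewrite /legal /=; lia.
  by have := ht (S i.+2); rewrite /legal /=; lia.
case=> [|i] // _.
have := ht (C i.+2); rewrite /legal /=.
case: (s i.+1) => [|a]; first by rewrite mul0n.
case: (s i.+2) => [|b]; first by rewrite muln0.
by rewrite andbT.
Qed.

Lemma zeck_bound x : zeck_like x -> forall M,
  \sum_(1 <= i < M.+1) x i * fib i < fib M.+1.
Proof.
move=> [h1 h2].
suff H : forall M, \sum_(1 <= i < M.+1) x i * fib i < fib M.+1 /\
                   \sum_(1 <= i < M.+2) x i * fib i < fib M.+2 by move=> M; case: (H M).
elim=> [|M [IH1 IH2]].
  rewrite big_geq // big_nat1 /=; split => //; rewrite muln1; exact: leq_ltn_trans (h1 1 isT) _.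
split => //.
rewrite big_nat_recr //.
have := h1 M.+2 isT; case hxe: (x M.+2) => [|[|k]] hx; last by lia.
  rewrite /= mul0n addn0 (fibSS M.+1); exact: leq_trans IH2 (leq_addr _ _).
have hz : x M.+1 = 0 by have := h2 M.+1 isT; rewrite hxe muln1.
rewrite /= big_nat_recr //= hz mul0n addn0 mul1n (fibSS M.+1) addnC ltn_add2l.
exact: IH1.
Qed.

Lemma zeck_unique x y : zeck_like x -> zeck_like y -> forall N,
  \sum_(1 <= i < N) x i * fib i = \sum_(1 <= i < N) y i * fib i ->
  forall i, 1 <= i < N -> x i = y i.
Proof.
move=> zx zy; have bx := zeck_bound x zx; have by' := zeck_bound y zy.
case: zx => [hx1 _]; case: zy => [hy1 _].
elim=> [|N IH]; first by move=> _ i; lia.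
case: N IH => [|M] IH; first by move=> _ i; lia.
rewrite big_nat_recr // [in X in _ = X]big_nat_recr //= => he i hi.
have hxM := hx1 M.+1 isT; have hyM := hy1 M.+1 isT.
have bxM := bx M; have byM := by' M.
have hxy : x M.+1 = y M.+1.
  move: he bxM byM; case: (x M.+1) hxM => [|[|?]]; case: (y M.+1) hyM => [|[|?]] //; lia.
case: (eqVneq i M.+1) => [->//|ne].
apply: IH; last by move: ne hi; rewrite neq_ltn => /orP[]; lia.
by move: he; rewrite hxy; lia.
Qed.

End Dm.
Import Dm.
Local Open Scope ring_scope.

Lemma Pc_fz N s : Pc fz N s = (\sum_(1 <= i < N) s i * fib i)%N%:Z.
Proof.
rewrite /Pc /fz; apply: (big_rec2 (fun a (b : nat) => a = b%:Z)) => // i a b _ ->.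
by rewrite PoszD PoszM.
Qed.

Lemma Pc_start c N n : (1 < N)%N -> Pc c N (start n) = n%:Z * c 1%N.
Proof.
move=> hN; rewrite /Pc big_ltn // {1}/start eqxx.
rewrite (eq_big_nat _ _ (F2 := fun => 0)) ?big1 ?addr0 // => i hi.
by rewrite /start ifN ?mul0r //; lia.
Qed.

Lemma sum_trunc (F : nat -> int) (d : nat -> nat) imax N : (imax < N)%N ->
  \sum_(1 <= i < N) (if (i <= imax)%N then d i else 0%N)%:Z * F i =
  \sum_(1 <= i < imax.+1) (d i)%:Z * F i.
Proof.
move=> h.
case: imax h => [|im] h.
  rewrite [RHS]big_geq // (eq_big_nat _ _ (F2 := fun => 0)) ?big1 // => i hi.
  by rewrite ifN ?mul0r //; lia.
rewrite (big_cat_nat _ (n := im.+2)) //=.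
rewrite [X in _ + X](eq_big_nat _ _ (F2 := fun => 0)) ; last first.
  by move=> i hi; rewrite ifN ?mul0r //; lia.
rewrite big1_eq addr0.
apply: eq_big_nat => i hi; rewrite ifT //; lia.
Qed.

Lemma sum_nat_eq (F : nat -> nat) (d : nat -> nat) imax N : (imax < N)%N ->
  (\sum_(1 <= i < N) (if (i <= imax)%N then d i else 0%N) * F i =
  \sum_(1 <= i < imax.+1) d i * F i)%N.
Proof.
move=> h.
case: imax h => [|im] h.
  rewrite [RHS]big_geq // (eq_big_nat _ _ (F2 := fun => 0%N)) ?big1 // => i hi.
  by rewrite ifN ?mul0n //; lia.
rewrite (big_cat_nat _ (n := im.+2)) //=.
rewrite [X in (_ + X)%N](eq_big_nat _ _ (F2 := fun => 0%N)) ; last first.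
  by move=> i hi; rewrite ifN ?mul0n //; lia.
rewrite big1_eq addn0.
apply: eq_big_nat => i hi; rewrite ifT //; lia.
Qed.

Lemma extra0 ms : (\sum_(m <- ms) extra m)%N = 0%N -> forall i, (2 <= i)%N -> MC ms i = 0%N.
Proof.
elim: ms => [|m ms IH] // h i hi.
rewrite big_cons in h; move/eqP: h; rewrite addn_eq0 => /andP[/eqP h1 /eqP h2].
rewrite MC_cons IH // addn0.
case: m h1 => j /= h1 //.
rewrite eqCmv; case: eqVneq => // e; subst; lia.
Qed.

Theorem mainTheorem6 (n : nat) (delta : nat -> nat) (imax : nat) (ms : seq move) :
  (1 <= n)%N -> zeckendorf n delta imax -> game_path n ms ->
  ((size ms)%:Z =
     \sum_(1 <= i < imax.+1) acoef i * (delta i)%:Z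
     - ((\sum_(2 <= i < (maxidx ms).+1) (i - 1) * MC ms i)%N)%:Z)
  /\
  ((size ms)%:Z = \sum_(1 <= i < imax.+1) acoef i * (delta i)%:Z
     <-> (forall i, (2 <= i)%N -> MC ms i = 0%N)).
Proof.
move=> hn [z1 z2 z3 z4 z5] hp.
set K := maxidx ms.
set N := (maxn K imax).+2.
have hK : all (fun m => (midx m <= K)%N) ms.
  by apply/allP => m hm; exact: (@leq_bigmax_seq _ ms xpredT midx m hm isT).
have hall : all (fun m => ((midx m).+1 < N)%N) ms.
  apply/allP => m hm; move/allP: hK => /(_ m hm); rewrite /N; lia.
have [e1 e2 ht] := @path_lemma N ms (start n) hp hall.
set f := final (start n) ms in e1 e2 ht.
pose d := fun i => if (i <= imax)%N then delta i else 0%N.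
have zd : zeck_like d.
  split => i hi; rewrite /d /=.
    by case: ifP => h //; apply: z3; lia.
  case: (ltnP i imax) => h.
    rewrite ifT; last by lia.
    by apply: z4; lia.
  by rewrite ?(ifN _ _ (_ : ~~ (i.+1 <= imax)%N)) ?muln0 //; lia.
have zf := @terminal_zeck f ht.
have hN : (imax < N)%N by rewrite /N; lia.
have hsum : (\sum_(1 <= i < N) f i * fib i = \sum_(1 <= i < N) d i * fib i)%N.
  rewrite sum_nat_eq // -z5.
  move: e2; rewrite Pc_start; last by rewrite /N.
  rewrite Pc_fz /fz.
  have -> : fib 1 = 1%N by [].
  rewrite mulr1 => /eqP; rewrite eqz_nat => /eqP ->. by [].
have hu := @zeck_unique f d zf zd N hsum.
have hPw : Pc wt N f = \sum_(1 <= i < imax.+1) (delta i)%:Z * wt i.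
  rewrite /Pc (eq_big_nat _ _ (F2 := fun i => (d i)%:Z * wt i)); last by move=> i hi; rewrite hu.
  exact: sum_trunc.
have hA : \sum_(1 <= i < imax.+1) acoef i * (delta i)%:Z = - \sum_(1 <= i < imax.+1) (delta i)%:Z * wt i.
  rewrite -sumrN; apply: eq_bigr => i _; rewrite /acoef /wt; ring.
have hext := @sum_extra K ms hK.
have w1 : wt 1 = 0 by [].
move: e1; rewrite Pc_start ?w1 ?mulr0 ?sum_cost ?hPw; last by rewrite /N.
rewrite -/K in hext *; rewrite hext => e1.
have P1 : (size ms)%:Z = \sum_(1 <= i < imax.+1) acoef i * (delta i)%:Z
     - ((\sum_(2 <= i < K.+1) (i - 1) * MC ms i)%N)%:Z by rewrite hA; lia.
split => //.
split.
  move=> hs; apply: extra0; rewrite hext; move: P1; rewrite hs; lia.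
move=> h0; rewrite P1 (eq_big_nat _ _ (F2 := fun => 0%N)) ?big1_eq ?subr0 //.
by move=> i /andP[hi _]; rewrite h0 ?muln0.
Qed.
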